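(* Let $D$ be a pv-monoid (idempotent, with symmetric valuation function), $P$ a nonempty finite set of ports and $f$ a PCL formula over $P$. Then there exist finite index sets $I$ and $J_i$ ($i\in I$) and full monomials $m_{i,j}$ ($i\in I$, $j\in J_i$) such that \[f\equiv\bigoplus_{i\in I}\sum_{j\in J_i}m_{i,j}\equiv\bigoplus_{i\in I}\Big(1\otimes\sum_{j\in J_i}m_{i,j}\Big).\]
   Context: A pv-monoid $(D,\oplus,\mathrm{val},\otimes,0,1)$ consists of a commutative monoid $(D,\oplus,0)$, a map $\mathrm{val}$ from nonempty finite sequences over $D$ to $D$ with $\mathrm{val}(d)=d$ and $\mathrm{val}(d_1,\dots,d_n)=0$ whenever some $d_i=0$, a binary operation $\otimes$ and an element $1$ with $\mathrm{val}(1,\dots,1)=1$, $0\otimes d=d\otimes0=0$, $1\otimes d=d\otimes1=d$. Standing assumption: $D$ is idempotent and $\mathrm{val}$ is symmetric. An empty $\oplus$-sum is $0$. $I(P)$ is the set of nonempty subsets of $P$, $C(P)$ the set of nonempty subsets of $I(P)$. PIL formulas: $\phi::=true\mid p\mid\overline{\phi}\mid\phi\vee\phi$ ($p\in P$), $\alpha\models_i p$ iff $p\in\alpha$, negation and disjunction as usual, $\wedge$ via De Morgan. A full monomial is a PIL formula $\bigwedge_{p\in P_+}p\wedge\bigwedge_{p\in P_-}\overline p$ with $P_+\cup P_-=P$, $P_+\cap P_-=\emptyset$. PCL formulas: $f::=true\mid\phi\mid\neg f\mid f\sqcup f\mid f+f$; $\gamma\models true$; $\gamma\models\phi$ iff every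 $\alpha\in\gamma$ satisfies $\phi$; $\neg,\sqcup$ are complement and union; $\gamma\models f_1+f_2$ iff $\gamma=\gamma_1\cup\gamma_2$ with $\gamma_1,\gamma_2\in C(P)$, $\gamma_1\models f_1,\gamma_2\models f_2$. $\sum_{j\in J}m_j$ is the $+$-combination. Weighted formulas are built from constants $d\in D$ and PCL formulas by $\oplus,\otimes$ (and further operators); semantics $\|\cdot\|:C(P)\to D$ with $\|d\|(\gamma)=d$, $\|f\|(\gamma)=1$ if $\gamma\models f$ and $0$ otherwise, $\oplus,\otimes$ pointwise. $\equiv$ means equality of semantics on all of $C(P)$. *)

(* Defs.v *)
From Stdlib Require Import List Permutation ClassicalEpsilon.
From mathcomp Require Import all_boot.

Set Implicit Arguments.
Unset Strict Implicit.
Unset Printing Implicit Defensive.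

Record pvMonoid := PvMonoid {
  pv_carrier :> Type;
  pv_add : pv_carrier -> pv_carrier -> pv_carrier;
  pv_zero : pv_carrier;
  (* val is given on all lists; only its values on nonempty lists matter *)
  pv_val : list pv_carrier -> pv_carrier;
  pv_mul : pv_carrier -> pv_carrier -> pv_carrier;
  pv_one : pv_carrier;
  pv_addA : forall a b c, pv_add a (pv_add b c) = pv_add (pv_add a b) c;
  pv_addC : forall a b, pv_add a b = pv_add b a;
  pv_add0d : forall a, pv_add pv_zero a = a;
  pv_val1 : forall d, pv_val (d :: nil) = d;
  pv_val0 : forall s, List.In pv_zero s -> pv_val s = pv_zero;
  pv_val_one : forall n, 0 < n -> pv_val (nseq n pv_one) = pv_one;
  pv_mul0d : forall d, pv_mul pv_zero d = pv_zero;
  pv_muld0 : forall d, pv_mul d pv_zero = pv_zero;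
  pv_mul1d : forall d, pv_mul pv_one d = d;
  pv_muld1 : forall d, pv_mul d pv_one = d
}.

Definition pv_idempotent (D : pvMonoid) : Prop :=
  forall d : D, pv_add d d = d.

Definition pv_val_symmetric (D : pvMonoid) : Prop :=
  forall s t : list D, s <> nil -> Permutation s t -> pv_val s = pv_val t.

Section PortLogic.
Variable P : finType.

Definition is_interaction (a : {set P}) : bool := a != set0.

Definition is_C (g : {set {set P}}) : Prop :=
  g != set0 /\ forall a, a \in g -> is_interaction a.

Inductive pil : Type :=
| PilTrue : pil
| PilVar : P -> pil
| PilNeg : pil -> pil
| PilOr : pil -> pil -> pil.

Fixpoint pil_sat (a : {set P}) (phi : pil) : bool :=
  match phi with
  | PilTrue => true
  | PilVar p => p \in a
  | PilNeg phi1 => ~~ pil_sat a phi1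
  | PilOr phi1 phi2 => pil_sat a phi1 || pil_sat a phi2
  end.

Definition PilAnd (phi1 phi2 : pil) : pil :=
  PilNeg (PilOr (PilNeg phi1) (PilNeg phi2)).

(* full monomial determined by P_+ = Pp (and P_- = complement of Pp):
   /\_{p in P+} p /\ /\_{p in P-} ~p, conjunction over all ports of P *)
Definition pil_lit (Pp : {set P}) (p : P) : pil :=
  if p \in Pp then PilVar p else PilNeg (PilVar p).

Fixpoint pil_bigand (l : seq pil) : pil :=
  match l with
  | nil => PilTrue
  | phi :: nil => phi
  | phi :: l' => PilAnd phi (pil_bigand l')
  end.

Definition full_monomial (Pp : {set P}) : pil :=
  pil_bigand [seq pil_lit Pp p | p <- enum P].

Inductive pcl : Type :=
| PclTrue : pcl
| PclPil : pil -> pcl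
| PclNeg : pcl -> pcl
| PclOr : pcl -> pcl -> pcl
| PclPlus : pcl -> pcl -> pcl.

Fixpoint pcl_sat (g : {set {set P}}) (f : pcl) : Prop :=
  match f with
  | PclTrue => True
  | PclPil phi => forall a, a \in g -> pil_sat a phi
  | PclNeg f1 => ~ pcl_sat g f1
  | PclOr f1 f2 => pcl_sat g f1 \/ pcl_sat g f2
  | PclPlus f1 f2 => exists g1 g2, is_C g1 /\ is_C g2 /\ g = g1 :|: g2 /\
                       pcl_sat g1 f1 /\ pcl_sat g2 f2
  end.

(* + combination of a nonempty family m0, m1, ..., mk *)
Fixpoint pcl_sum (m0 : pcl) (ms : seq pcl) : pcl :=
  match ms with
  | nil => m0
  | m1 :: ms' => PclPlus m0 (pcl_sum m1 ms')
  end.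

(* weighted formulas (fragment with constants, PCL formulas, (+), (x)) *)
Inductive wform (D : pvMonoid) : Type :=
| WConst : D -> wform D
| WPcl : pcl -> wform D
| WOplus : wform D -> wform D -> wform D
| WOtimes : wform D -> wform D -> wform D.

Fixpoint wsem (D : pvMonoid) (w : wform D) (g : {set {set P}}) : D :=
  match w with
  | WConst d => d
  | WPcl f => if excluded_middle_informative (pcl_sat g f)
              then pv_one D else pv_zero D
  | WOplus w1 w2 => pv_add (wsem w1 g) (wsem w2 g)
  | WOtimes w1 w2 => pv_mul (wsem w1 g) (wsem w2 g)
  end.

Definition wbigoplus (D : pvMonoid) (l : seq (wform D)) : wform D :=
  foldr (@WOplus D) (WConst (pv_zero D)) l.

Definition wequiv (D : pvMonoid) (w1 w2 : wform D) : Prop :=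
  forall g, is_C g -> wsem w1 g = wsem w2 g.
End PortLogic.

(* Main.v *)
Require Import Defs.
From mathcomp Require Import all_boot.
From Stdlib Require Import ClassicalEpsilon.

Set Implicit Arguments.
Unset Strict Implicit.
Unset Printing Implicit Defensive.

Section Aux.
Variable P : finType.

Lemma bigand_sat (a : {set P}) l : pil_sat a (pil_bigand l) = all (pil_sat a) l.
Proof.
elim: l => [//|phi l IH] /=.
case: l IH => [|psi l] IH; first by rewrite /= andbT.
rewrite [pil_bigand _]/= [pil_sat _ (PilAnd _ _)]/= IH.
by case: (pil_sat a phi); case: (all _ _).
Qed.

Lemma fm_sat (a Pp : {set P}) : pil_sat a (full_monomial Pp) = (a == Pp).
Proof.
rewrite /full_monomial bigand_sat all_map.
apply/allP/eqP => [H|->].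
  apply/setP => p; have := H p (mem_enum _ p).
  by rewrite /= /pil_lit; case: (p \in Pp) => /=; case: (p \in a).
by move=> p _ /=; rewrite /pil_lit; case: ifP => /= ->.
Qed.

Definition msum (ij : {set P} * seq {set P}) : pcl P :=
  pcl_sum (PclPil (full_monomial ij.1)) [seq PclPil (full_monomial Pp) | Pp <- ij.2].

Lemma sum_sat a0 l (g : {set {set P}}) :
  is_interaction a0 -> (forall a, a \in l -> is_interaction a) -> is_C g ->
  (pcl_sat g (msum (a0, l)) <-> g = [set x in a0 :: l]).
Proof.
rewrite /msum /=.
elim: l a0 g => [|a1 l IH] a0 g Ha0 Hl [Hg0 Hg] /=.
  split => [H|->].
    apply/setP => x; rewrite !inE; apply/idP/idP => [Hx|/eqP->].
      by rewrite -fm_sat; apply: H.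
    case/set0Pn: Hg0 => y Hy; have := H y Hy; rewrite fm_sat => /eqP <-//.
  by move=> a; rewrite !inE fm_sat.
split.
  move=> [g1 [g2 [[H10 H1] [C2 [-> [S1 S2]]]]]].
  have Hl' : forall a, a \in l -> is_interaction a.
    by move=> a Ha; apply: Hl; rewrite inE Ha orbT.
  have := (IH a1 g2 (Hl a1 (mem_head _ _)) Hl' C2).1 S2 => ->.
  have -> : g1 = [set a0].
    apply/setP => x; rewrite !inE; apply/idP/idP => [Hx|/eqP->].
      by rewrite -fm_sat; apply: S1.
    case/set0Pn: H10 => y Hy; have := S1 y Hy; rewrite fm_sat => /eqP <-//.
  by apply/setP => x; rewrite !inE.
move=> Eg.
have Hl' : forall a, a \in l -> is_interaction a.
  by move=> a Ha; apply: Hl; rewrite inE Ha orbT.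
have C2 : is_C [set x in a1 :: l].
  split; first by apply/set0Pn; exists a1; rewrite inE mem_head.
  by move=> a; rewrite inE; apply: Hl.
exists [set a0], [set x in a1 :: l]; split.
  split; first by apply/set0Pn; exists a0; rewrite inE.
  by move=> a; rewrite inE => /eqP->.
split; first exact: C2.
split; first by rewrite Eg; apply/setP => x; rewrite !inE.
split; first by move=> a; rewrite inE fm_sat.
by apply/(IH a1 _ (Hl a1 (mem_head _ _)) Hl' C2).
Qed.

Definition mk (g : {set {set P}}) : {set P} * seq {set P} :=
  (head set0 (enum g), behead (enum g)).

Lemma mk_sat (g g0 : {set {set P}}) : is_C g -> is_C g0 ->
  (pcl_sat g0 (msum (mk g)) <-> g0 = g).
Proof.
move=> [Hg0 Hg] C0.
have E : head set0 (enum g) :: behead (enum g) = enum g.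
  case: (enum g) (mem_enum g) => [|x s] //= Hm.
  case/set0Pn: Hg0 => y Hy; have := Hm y; rewrite Hy //.
have Hi : forall a, a \in head set0 (enum g) :: behead (enum g) -> is_interaction a.
  by move=> a; rewrite E mem_enum; apply: Hg.
rewrite /mk; rewrite (sum_sat (Hi _ (mem_head _ _))) //.
  have -> : [set x in head set0 (enum g) :: behead (enum g)] = g.
    by apply/setP => x; rewrite E inE mem_enum.
  by [].
by move=> a Ha; apply: Hi; rewrite inE Ha orbT.
Qed.

Definition decP (Q : Prop) : bool := if excluded_middle_informative Q then true else false.

Lemma decPP (Q : Prop) : decP Q <-> Q.
Proof. by rewrite /decP; case: excluded_middle_informative. Qed.

Variable D : pvMonoid.
Hypothesis HidD : pv_idempotent D.

Lemma key (F : wform P D -> wform P D) (HF : forall w g, wsem (F w) g = wsem w g)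
  (L : seq {set {set P}}) g0 : is_C g0 -> (forall g, g \in L -> is_C g) ->
  wsem (wbigoplus [seq F (WPcl D s) | s <- [seq msum ij | ij <- [seq mk g | g <- L]]]) g0
  = if g0 \in L then pv_one D else pv_zero D.
Proof.
move=> C0; elim: L => [|g L IH] HL //=.
rewrite IH; last by move=> h Hh; apply: HL; rewrite inE Hh orbT.
rewrite HF /= inE.
have Cg : is_C g by apply: HL; rewrite mem_head.
case: excluded_middle_informative => [H|Hn] /=.
  move/(mk_sat Cg C0): H => ->.
  by rewrite eqxx /=; case: (g \in L); rewrite ?HidD // pv_addC pv_add0d.
have -> : (g0 == g) = false by apply/eqP => E; apply: Hn; apply/(mk_sat Cg C0).
by rewrite /= pv_add0d.
Qed.

End Aux.

Theorem mainTheorem11 (D : pvMonoid) (HidD : pv_idempotent D)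
  (HsymD : pv_val_symmetric D) (P : finType) (HP : 0 < #|P|) (f : pcl P) :
  exists I : seq ({set P} * seq {set P}),
    let sums := [seq pcl_sum (PclPil (full_monomial ij.1))
                             [seq PclPil (full_monomial Pp) | Pp <- ij.2]
                | ij <- I] in
    wequiv (WPcl D f) (wbigoplus [seq WPcl D s | s <- sums]) /\
    wequiv (WPcl D f)
      (wbigoplus [seq WOtimes (WConst P (pv_one D)) (WPcl D s) | s <- sums]).
Proof.
set L := [seq g <- enum {set {set P}} | decP (is_C g /\ pcl_sat g f)].
have HL : forall g, g \in L -> is_C g.
  by move=> g; rewrite mem_filter => /andP[/decPP[]].
have Hmem : forall g, is_C g -> (g \in L) = decP (pcl_sat g f).
  move=> g Cg; rewrite mem_filter mem_enum andbT.
  apply/idP/idP => /decPP H; apply/decPP; first by case: H.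
  by split.
exists [seq mk g | g <- L] => /=; split => g Cg.
  rewrite (@key _ _ HidD id) // Hmem //= /decP.
  by case: excluded_middle_informative.
rewrite (@key _ _ HidD (fun w => WOtimes (WConst P (pv_one D)) w)) //.
  rewrite Hmem //= /decP.
  by case: excluded_middle_informative.
by move=> w h /=; rewrite pv_mul1d.
Qed.
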